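(* For every $n \in \mathbb{N}$, the $n^\text{th}$ Jones--Wenzl projector $\mathrm{j}_n \in \mathrm{End}_{\mathcal{TL}_0(\Bbbk)}([n])$ is idempotent: $\mathrm{j}_n^{2} = \mathrm{j}_n$.
   Context: Let $\Bbbk$ be a field and let $\mathcal{TL}_0(\Bbbk)$ be the strict $\Bbbk$-linear monoidal category with objects $[0],[1],[2],\ldots$ (where $[m]\otimes[n]=[m+n]$), whose morphisms are generated by $\mathrm{cup}\colon[0]\to[2]$ and $\mathrm{cap}\colon[2]\to[0]$ subject to the relations: the circle $\mathrm{cap}\circ\mathrm{cup}$ equals $\mathrm{id}_{[0]}$, and both zig-zags $(\mathrm{id}_{[1]}\otimes\mathrm{cap})\circ(\mathrm{cup}\otimes\mathrm{id}_{[1]})$ and $(\mathrm{cap}\otimes\mathrm{id}_{[1]})\circ(\mathrm{id}_{[1]}\otimes\mathrm{cup})$ equal $0$ (this is the $q=0$ specialization of the renormalized Temperley--Lieb category in which the zig-zag equals $q\cdot\mathrm{id}_{[1]}$ and the circle equals $(q^2+1)\mathrm{id}_{[0]}$). A subset $I\subseteq\{1,\ldots,n\}$ is called apt if $n\notin I$ and $i\in I$ implies $i-1,i+1\notin I$. For an apt $I$, $\mathrm{cap}_{I,n}$ denotes the cap diagram from $[n]$ consisting of caps joining positions $(i,i+1)$ for $i\in I$ (and through-strands elsewhere), $\mathrm{cup}_{I,n}$ is the corresponding cup diagram obtained by reflecting it, and $c_{I,n}=\mathrm{cup}_{I,n}\circ\mathrm{cap}_{I,n}\in\mathrm{End}_{\mathcal{TL}_0(\Bbbk)}([n])$.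 The $n^\text{th}$ Jones--Wenzl projector is defined as $\mathrm{j}_n=\sum_{I\subseteq\{1,\ldots,n\}\text{ apt}}(-1)^{|I|}c_{I,n}$. *)

(* Defs.v *)
From HB Require Import structures.
From mathcomp Require Import all_boot all_order all_algebra.
Set Implicit Arguments. Unset Strict Implicit. Unset Printing Implicit Defensive.
Import GRing.Theory.
Local Open Scope ring_scope.

(* A strict K-linear monoidal category whose monoid of objects is (nat,+),
   object m standing for [m], equipped with morphisms cup : [0] -> [2] and
   cap : [2] -> [0].  (Data only; axioms below.) *)
Record PRO_ops (K : fieldType) := PROOps {
  hom  : nat -> nat -> lmodType K;
  mcomp : forall a b c, hom b c -> hom a b -> hom a c;
  idm  : forall a, hom a a;
  tens : forall a b c d, hom a b -> hom c d -> hom (a + c) (b + d);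
  cup  : hom 0 2;
  cap  : hom 2 0 }.

Arguments mcomp {K} C {a b c} : rename.
Arguments idm {K} C a : rename.
Arguments tens {K} C {a b c d} : rename.
Arguments cup {K} C : rename.
Arguments cap {K} C : rename.

Definition castH (K : fieldType) (C : PRO_ops K) (a b a' b' : nat)
    (ea : a = a') (eb : b = b') (f : hom C a b) : hom C a' b' :=
  match ea in _ = x return hom C x b' with
  | erefl => match eb in _ = y return hom C a y with erefl => f end end.

Record isTL0 (K : fieldType) (C : PRO_ops K) : Prop := IsTL0 {
  compA : forall a b c d (f : hom C c d) (g : hom C b c) (h : hom C a b),
      mcomp C f (mcomp C g h) = mcomp C (mcomp C f g) h;
  comp1f : forall a b (f : hom C a b), mcomp C (idm C b) f = f;
  compf1 : forall a b (f : hom C a b), mcomp C f (idm C a) = f;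
  compDl : forall a b c (f f' : hom C b c) (g : hom C a b),
      mcomp C (f + f') g = mcomp C f g + mcomp C f' g;
  compDr : forall a b c (f : hom C b c) (g g' : hom C a b),
      mcomp C f (g + g') = mcomp C f g + mcomp C f g';
  compZl : forall a b c (k : K) (f : hom C b c) (g : hom C a b),
      mcomp C (k *: f) g = k *: mcomp C f g;
  compZr : forall a b c (k : K) (f : hom C b c) (g : hom C a b),
      mcomp C f (k *: g) = k *: mcomp C f g;
  tens_comp : forall a b c a' b' c' (f : hom C b c) (g : hom C a b)
      (f' : hom C b' c') (g' : hom C a' b'),
      tens C (mcomp C f g) (mcomp C f' g') = mcomp C (tens C f f') (tens C g g');
  tens_id : forall a b, tens C (idm C a) (idm C b) = idm C (a + b);
  tensA : forall a b c d e g (f : hom C a b) (f' : hom C c d) (f'' : hom C e g),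
      tens C (tens C f f') f'' =
      castH (addnA a c e) (addnA b d g) (tens C f (tens C f' f''));
  tens0f : forall a b (f : hom C a b), tens C (idm C 0) f = f;
  tensf0 : forall a b (f : hom C a b),
      castH (addn0 a) (addn0 b) (tens C f (idm C 0)) = f;
  tensDl : forall a b c d (f f' : hom C a b) (g : hom C c d),
      tens C (f + f') g = tens C f g + tens C f' g;
  tensDr : forall a b c d (f : hom C a b) (g g' : hom C c d),
      tens C f (g + g') = tens C f g + tens C f g';
  tensZl : forall a b c d (k : K) (f : hom C a b) (g : hom C c d),
      tens C (k *: f) g = k *: tens C f g;
  tensZr : forall a b c d (k : K) (f : hom C a b) (g : hom C c d),
      tens C f (k *: g) = k *: tens C f g;
  (* Temperley--Lieb relations at q = 0 *)
  circle : mcomp C (cap C) (cup C) = idm C 0;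
  zigzag1 : mcomp C (tens C (idm C 1) (cap C)) (tens C (cup C) (idm C 1)) = 0;
  zigzag2 : mcomp C (tens C (cap C) (idm C 1)) (tens C (idm C 1) (cup C)) = 0 }.

(* Position p (1-based, 1 <= p <= n) belongs to I; element i : 'I_n of I
   encodes position i+1. *)
Definition inI (n : nat) (I : {set 'I_n}) (p : nat) : bool :=
  [exists i in I, i.+1 == p].

Definition apt (n : nat) (I : {set 'I_n}) : bool :=
  [forall i in I, [&& i.+1 != n, ~~ inI I i & ~~ inI I i.+2]].

(* Number of through-strands of the cap diagram cap_{P,n}, where P is the
   (1-based) set of left endpoints of caps. *)
Fixpoint tgtI (n : nat) (P : nat -> bool) : nat :=
  match n with
  | 0 => 0
  | S n' =>
    if P 1 then
      match n' with
      | 0 => 1 (* not reached for apt sets *)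
      | S n'' => tgtI n'' (fun p => P (p + 2))
      end
    else (tgtI n' (fun p => P (p + 1))).+1
  end.

Section Diagrams.
Variables (K : fieldType) (C : PRO_ops K).

(* cap_{P,n} : [n] -> [n - 2|P|] : caps joining (p,p+1) for p in P,
   through-strands elsewhere (built left to right). *)
Fixpoint capI (n : nat) (P : nat -> bool) : hom C n (tgtI n P) :=
  match n as n0 return hom C n0 (tgtI n0 P) with
  | 0 => idm C 0
  | S n' =>
    match P 1 as b return
      hom C n'.+1 (if b then match n' with
                             | 0 => 1
                             | S n'' => tgtI n'' (fun p => P (p + 2)) end
                   else (tgtI n' (fun p => P (p + 1))).+1) with
    | true =>
      match n' as n1 return
        hom C n1.+1 (match n1 with
                     | 0 => 1
                     | S n'' => tgtI n'' (fun p => P (p + 2)) end) with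
      | 0 => idm C 1
      | S n'' => tens C (cap C) (capI n'' (fun p => P (p + 2)))
      end
    | false => tens C (idm C 1) (capI n' (fun p => P (p + 1)))
    end
  end.

Fixpoint cupI (n : nat) (P : nat -> bool) : hom C (tgtI n P) n :=
  match n as n0 return hom C (tgtI n0 P) n0 with
  | 0 => idm C 0
  | S n' =>
    match P 1 as b return
      hom C (if b then match n' with
                       | 0 => 1
                       | S n'' => tgtI n'' (fun p => P (p + 2)) end
             else (tgtI n' (fun p => P (p + 1))).+1) n'.+1 with
    | true =>
      match n' as n1 return
        hom C (match n1 with
               | 0 => 1
               | S n'' => tgtI n'' (fun p => P (p + 2)) end) n1.+1 with
      | 0 => idm C 1
      | S n'' => tens C (cup C) (cupI n'' (fun p => P (p + 2)))
      end
    | false => tens C (idm C 1) (cupI n' (fun p => P (p + 1)))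
    end
  end.

Definition cI (n : nat) (I : {set 'I_n}) : hom C n n :=
  mcomp C (cupI n (inI I)) (capI n (inI I)).

Definition jw (n : nat) : hom C n n :=
  \sum_(I : {set 'I_n} | apt I) ((-1) ^+ #|I|) *: cI I.

End Diagrams.

(* Main.v *)
Require Import Defs.
From HB Require Import structures.
From mathcomp Require Import all_boot all_order all_algebra.
From Stdlib Require Import FunctionalExtensionality.
Set Implicit Arguments. Unset Strict Implicit. Unset Printing Implicit Defensive.

Lemma inI_char n (A : {set 'I_n}) (f : nat -> bool) :
  (forall i : 'I_n, (i \in A) = f i) ->
  forall p, inI A p = [&& 0 < p, p <= n & f p.-1].
Proof.
move=> Hf p; apply/existsP/and3P.
  by case=> i /andP [iA /eqP <-]; split => //; rewrite -Hf.
case=> p0 pn fp; have pn' : p.-1 < n by case: p p0 pn fp.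
exists (Ordinal pn'); rewrite Hf fp /=; case: p p0 pn fp {pn'} => //.
Qed.

Lemma inI_mem n (A : {set 'I_n}) (i : 'I_n) : inI A i.+1 = (i \in A).
Proof.
apply/existsP/idP.
  by case=> j /andP [jA /eqP [e]]; have -> : i = j by apply: val_inj.
by move=> iA; exists i; rewrite iA eqxx.
Qed.

Lemma inI_range n (A : {set 'I_n}) p : inI A p -> 0 < p <= n.
Proof. by case/existsP=> j /andP [_ /eqP <-]; rewrite ltn_ord. Qed.

Lemma inI0 n (A : {set 'I_n}) : inI A 0 = false.
Proof. by case H: (inI A 0) => //; have := inI_range H. Qed.

Definition AP n (Q : nat -> bool) :=
  forall p, Q p -> [/\ p != n, ~~ Q p.-1 & ~~ Q p.+1].

Lemma aptP n (A : {set 'I_n}) : reflect (AP n (inI A)) (apt A).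
Proof.
apply: (iffP forallP).
  move=> H p Hp; have := Hp; case/existsP=> j /andP [jA /eqP <-].
  by have := H j; rewrite jA /= => /and3P [].
move=> H j; apply/implyP => jA; rewrite -inI_mem in jA.
by case: (H _ jA) => /= a b c; rewrite a b c.
Qed.

Lemma shift1 n (Q : nat -> bool) : Q 0 = false ->
  (AP n.+1 (fun p => (0 < p) && Q p.-1) <-> AP n Q).
Proof.
move=> Q0; split=> H p Hp.
  have := H p.+1; rewrite /= Hp => /(_ isT) [a b c]; split.
  - by [].
  - by case: p Hp b {H a c} => [|q] //=; rewrite Q0.
  - by move: c => /=.
case: p Hp => [|p] //= Hp; case: (H p Hp) => a b c; split => //=.
- by rewrite negb_and b orbT.
Qed.

Lemma shift2 n (Q : nat -> bool) : Q 0 = false ->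
  (AP n.+2 (fun p => (0 < p) && ((p == 1) || Q p.-2)) <-> AP n Q).
Proof.
move=> Q0; split=> H p Hp.
  have := H p.+2; rewrite /= Hp => /(_ isT) [a b c]; split.
  - by [].
  - by case: p Hp b {H a c} => [|q] //=; rewrite Q0.
  - by move: c => /=.
case: p Hp => [|[|[|p]]] //= Hp.
- by split => //; rewrite Q0.
- by rewrite Q0 in Hp.
- case: (H p.+1 Hp) => a b c; split => //=.
Qed.


Lemma memlift n (J : {set 'I_n}) (i : 'I_n.+1) : (i \in lift ord0 @: J) = inI J i.
Proof.
apply/imsetP/existsP.
  by case=> j jJ ->; exists j; rewrite jJ /=.
case=> j /andP [jJ /eqP e]; exists j => //; apply: val_inj; by rewrite /= -e.
Qed.

Lemma inI_lift n (J : {set 'I_n}) p : inI (lift ord0 @: J) p = (0 < p) && inI J p.-1.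
Proof.
rewrite (@inI_char _ _ (fun k => inI J k)); last exact: memlift.
case: p => [|p] //=; case H: (inI J p); rewrite ?andbF ?andbT //.
by have /andP[] := inI_range H.
Qed.

Definition hB n (J : {set 'I_n}) : {set 'I_n.+2} := ord0 |: (lift ord0 @: (lift ord0 @: J)).

Lemma inI_hB n (J : {set 'I_n}) p : inI (hB J) p = (0 < p) && ((p == 1) || inI J p.-2).
Proof.
rewrite (@inI_char _ _ (fun k => (k == 0) || inI (lift ord0 @: J) k)); last first.
  by move=> i; rewrite in_setU1 memlift.
case: p => [|[|p]] //=; rewrite inI_lift /=.
case H: (inI J p); rewrite ?andbF ?andbT //.
by have /andP[] := inI_range H.
Qed.

Definition hA' n (I : {set 'I_n.+2}) : {set 'I_n.+1} := [set j : 'I_n.+1 | inI I j.+2].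
Definition hB' n (I : {set 'I_n.+2}) : {set 'I_n} := [set j : 'I_n | inI I j.+3].

Lemma hAK n (I : {set 'I_n.+2}) : ~~ inI I 1 -> lift ord0 @: hA' I = I.
Proof.
move=> H; apply/setP => i; rewrite memlift.
rewrite (@inI_char _ _ (fun k => inI I k.+2)); last by move=> j; rewrite inE.
rewrite -inI_mem; case: i => [[|k] Hk] /=; first by rewrite (negbTE H).
by rewrite -ltnS Hk.
Qed.

Lemma hA'K n (J : {set 'I_n.+1}) : hA' (lift ord0 @: J) = J.
Proof. by apply/setP => j; rewrite inE inI_lift /= inI_mem. Qed.

Lemma hBK n (I : {set 'I_n.+2}) : inI I 1 -> ~~ inI I 2 -> hB (hB' I) = I.
Proof.
move=> H1 H2; apply/setP => i; rewrite in_setU1 memlift inI_lift.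
rewrite (@inI_char _ _ (fun k => inI I k.+3)); last by move=> j; rewrite inE.
rewrite -inI_mem; case: i => [[|[|k]] Hk] /=.
- by rewrite H1.
- by rewrite (negbTE H2).
- by rewrite -2!ltnS Hk.
Qed.

Lemma hB'K n (J : {set 'I_n}) : hB' (hB J) = J.
Proof. by apply/setP => j; rewrite inE inI_hB /= inI_mem. Qed.

Lemma card_lift n (J : {set 'I_n}) : #|lift ord0 @: J| = #|J|.
Proof. by rewrite card_imset //; apply: lift_inj. Qed.

Lemma card_hB n (J : {set 'I_n}) : #|hB J| = #|J|.+1.
Proof. by rewrite cardsU1 memlift inI0 !card_lift. Qed.

Lemma apt_lift n (J : {set 'I_n}) : apt (lift ord0 @: J) = apt J.
Proof.
have E : inI (lift ord0 @: J) = (fun p => (0 < p) && inI J p.-1).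
  by apply: functional_extensionality => p; exact: inI_lift.
case: (@shift1 n (inI J) (inI0 J)) => S1 S2.
apply/aptP/aptP; rewrite E; [exact: S1 | exact: S2].
Qed.

Lemma apt_hB n (J : {set 'I_n}) : apt (hB J) = apt J.
Proof.
have E : inI (hB J) = (fun p => (0 < p) && ((p == 1) || inI J p.-2)).
  by apply: functional_extensionality => p; exact: inI_hB.
case: (@shift2 n (inI J) (inI0 J)) => S1 S2.
apply/aptP/aptP; rewrite E; [exact: S1 | exact: S2].
Qed.

Import GRing.Theory.
Local Open Scope ring_scope.

Section S.
Variables (K : fieldType) (C : PRO_ops K) (HC : isTL0 C).
Notation hom := (Defs.hom C).
Notation "f \c g" := (mcomp C f g) (at level 40, left associativity).
Notation "f (x) g" := (tens C f g) (at level 40, left associativity).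
Notation id := (idm C).
Lemma castH_conv a b (ea : a = a) (eb : b = b) (f : hom a b) : castH ea eb f = f.
Proof. by rewrite (eq_irrelevance ea erefl) (eq_irrelevance eb erefl). Qed.

Lemma comp0l a b c (g : hom a b) : (0 : hom b c) \c g = 0.
Proof. by rewrite -(scale0r (0 : hom b c)) (compZl HC) scale0r. Qed.
Lemma comp0r a b c (f : hom b c) : f \c (0 : hom a b) = 0.
Proof. by rewrite -(scale0r (0 : hom a b)) (compZr HC) scale0r. Qed.
Lemma compBl a b c (f f' : hom b c) (g : hom a b) : (f - f') \c g = f \c g - f' \c g.
Proof. by rewrite (compDl HC) -scaleN1r (compZl HC) scaleN1r. Qed.
Lemma compBr a b c (f : hom b c) (g g' : hom a b) : f \c (g - g') = f \c g - f \c g'.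
Proof. by rewrite (compDr HC) -scaleN1r (compZr HC) scaleN1r. Qed.
Lemma tens0l a b c d (g : hom c d) : (0 : hom a b) (x) g = 0.
Proof. by rewrite -(scale0r (0 : hom a b)) (tensZl HC) scale0r. Qed.
Lemma tens0r a b c d (f : hom a b) : f (x) (0 : hom c d) = 0.
Proof. by rewrite -(scale0r (0 : hom c d)) (tensZr HC) scale0r. Qed.
Lemma tensBr a b c d (f : hom a b) (g g' : hom c d) : f (x) (g - g') = f (x) g - f (x) g'.
Proof. by rewrite (tensDr HC) -scaleN1r (tensZr HC) scaleN1r. Qed.

Definition U : hom 2 2 := cup C \c cap C.

Lemma UU : U \c U = U.
Proof. by rewrite /U (Defs.compA HC) -[(cup C \c cap C) \c cup C](Defs.compA HC) (circle HC) (compf1 HC). Qed.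

Lemma UxId : U (x) id 1 = (cup C (x) id 1) \c (cap C (x) id 1).
Proof. by rewrite -(tens_comp HC) (comp1f HC). Qed.
Lemma IdxU : id 1 (x) U = (id 1 (x) cup C) \c (id 1 (x) cap C).
Proof. by rewrite -(tens_comp HC) (comp1f HC). Qed.

Lemma Z1 : (U (x) id 1) \c (id 1 (x) U) = 0.
Proof.
rewrite UxId IdxU.
rewrite -(Defs.compA HC) [(tens C (cap C) (id 1)) \c _](Defs.compA HC) (zigzag2 HC).
by rewrite comp0l comp0r.
Qed.

Lemma Z2 : (id 1 (x) U) \c (U (x) id 1) = 0.
Proof.
rewrite UxId IdxU.
rewrite -(Defs.compA HC) [(tens C (id 1) (cap C)) \c _](Defs.compA HC) (zigzag1 HC).
by rewrite comp0l comp0r.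
Qed.

Lemma A11 a b (f : hom a b) : id 1 (x) (id 1 (x) f) = id 2 (x) f.
Proof. by have := tensA HC (id 1) (id 1) f; rewrite castH_conv (tens_id HC) => <-. Qed.
Lemma A1U a b (f : hom a b) : id 1 (x) (U (x) f) = (id 1 (x) U) (x) f.
Proof. by have := tensA HC (id 1) U f; rewrite castH_conv => ->. Qed.
Lemma AU1 a b (f : hom a b) : U (x) (id 1 (x) f) = (U (x) id 1) (x) f.
Proof. by have := tensA HC U (id 1) f; rewrite castH_conv => ->. Qed.
Lemma idS m : id m.+1 = id 1 (x) id m.
Proof. by rewrite (tens_id HC). Qed.
Lemma inter a b c d (f : hom a b) (g : hom c d) : f (x) g = (f (x) id d) \c (id a (x) g).
Proof. by rewrite -(tens_comp HC) (compf1 HC) (comp1f HC). Qed.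
Lemma inter' a b c d (f : hom a b) (g : hom c d) : f (x) g = (id b (x) g) \c (f (x) id c).
Proof. by rewrite -(tens_comp HC) (compf1 HC) (comp1f HC). Qed.

Section Rec.
Variable X : forall n, hom n n.
Hypothesis X0 : X 0 = id 0.
Hypothesis X1 : X 1 = id 1.
Hypothesis Xrec : forall n, X n.+2 = id 1 (x) X n.+1 - U (x) X n.

Lemma killb n : X n.+2 \c (U (x) id n) = 0.
Proof.
case: n => [|m].
  rewrite Xrec X1 X0 compBl (tens_id HC) (comp1f HC).
  by rewrite -(tens_comp HC U U) UU (comp1f HC) subrr.
rewrite [X m.+3]Xrec [X m.+2]Xrec tensBr A11 A1U !compBl.
rewrite -(tens_comp HC (id 2) U (X m.+1) (id m.+1)) (comp1f HC) (compf1 HC).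
rewrite -(tens_comp HC U U (X m.+1) (id m.+1)) UU (compf1 HC).
rewrite (idS m) (AU1 (id m)) -(tens_comp HC (id 1 (x) U) (U (x) id 1) (X m) (id m)) Z2 tens0l.
by rewrite subr0 subrr.
Qed.

Lemma killc n : X n \c X n = X n -> (U (x) X n) \c (id 1 (x) X n.+1) = U (x) X n.
Proof.
case: n => [|m] IH.
  by rewrite X1 (tens_id HC) (compf1 HC).
rewrite [X m.+2]Xrec tensBr A11 A1U compBr.
rewrite -(tens_comp HC U (id 2) (X m.+1) (X m.+1)) IH (compf1 HC).
rewrite {2}(inter' U (X m.+1)) -(Defs.compA HC) (idS m) (AU1 (id m)).
rewrite -(tens_comp HC (U (x) id 1) (id 1 (x) U) (id m) (X m)) Z1 tens0l comp0r.
by rewrite subr0.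
Qed.

Lemma Xidem n : X n \c X n = X n.
Proof.
suff: X n \c X n = X n /\ X n.+1 \c X n.+1 = X n.+1 by case.
elim: n => [|n [IH1 IH2]].
  by rewrite X0 X1 !(comp1f HC).
split => //.
rewrite {2}[X n.+2]Xrec compBr.
rewrite (inter U (X n)) (Defs.compA HC) killb comp0l subr0.
rewrite {1}[X n.+2]Xrec compBl.
rewrite -(tens_comp HC (id 1) (id 1) (X n.+1) (X n.+1)) IH2 (comp1f HC) killc //.
Qed.
End Rec.

Definition D n (P : nat -> bool) : hom n n := mcomp C (cupI C n P) (capI C n P).
Lemma D0 P : D 0 P = id 0.
Proof. exact: (comp1f HC). Qed.
Lemma D_S0 n P : P 1 = false -> D n.+1 P = tens C (idm C 1) (D n (fun p => P (p+1))).
Proof.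
move=> HP; rewrite /D /=. rewrite HP.
rewrite -(tens_comp HC (idm C 1) (idm C 1)) (comp1f HC) //.
Qed.
Lemma D_S1 n P : P 1 = true -> D n.+2 P = tens C (mcomp C (cup C) (cap C)) (D n (fun p => P (p+2))).
Proof.
move=> HP; rewrite /D /=. rewrite HP. by rewrite -(tens_comp HC (cup C) (cap C)).
Qed.

Lemma cI_hB n (J : {set 'I_n}) : cI C (hB J) = U (x) cI C J.
Proof.
have E : (fun p => inI (hB J) (p + 2)%R) = inI J.
  apply: functional_extensionality => p.
  have -> : (p + 2)%R = p.+2 by exact: addn2.
  by rewrite inI_hB.
have := @D_S1 n (inI (hB J)); rewrite E inI_hB => /(_ isT) H.
exact: H.
Qed.

Lemma cI_lift n (J : {set 'I_n}) : cI C (lift ord0 @: J) = id 1 (x) cI C J.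
Proof.
have E : (fun p => inI (lift ord0 @: J) (p + 1)%R) = inI J.
  apply: functional_extensionality => p.
  have -> : (p + 1)%R = p.+1 by exact: addn1.
  by rewrite inI_lift.
have := @D_S0 n (inI (lift ord0 @: J)); rewrite E inI_lift /= inI0 => /(_ erefl) H.
exact: H.
Qed.

Lemma tens_sumr a b c d (f : hom a b) (I : finType) (P : pred I) (F : I -> hom c d) :
  f (x) (\sum_(i | P i) F i) = \sum_(i | P i) f (x) F i.
Proof. apply: big_morph; [exact: (tensDr HC) | exact: tens0r]. Qed.

Lemma jw0 : jw C 0 = id 0.
Proof.
rewrite /jw (big_pred1 set0); last first.
  move=> I; have -> : I = set0 by apply/setP => -[].
  by rewrite /= eqxx; apply/forallP => -[].
have H0 : forall m, #|(set0 : {set 'I_m})| = 0%N by move=> m; exact: cards0.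
rewrite H0.
by rewrite expr0 scale1r; exact: D0.
Qed.

Lemma jw1 : jw C 1 = id 1.
Proof.
rewrite /jw (big_pred1 set0); last first.
  move=> I /=; case: (set_0Vmem I) => [->|[i iI]].
    rewrite eqxx; apply/aptP => p.
    by rewrite (@inI_char _ _ (fun _ => false)) ?andbF // => j; rewrite in_set0.
  have -> : (I == set0) = false by apply/negbTE/set0Pn; exists i.
  apply/negbTE/negP => /aptP H.
  have i0 : i = ord0 by apply: val_inj; case: i {iI} => -[].
  rewrite i0 in iI; have := inI_mem I ord0; rewrite iI /=.
  by move=> /H [].
have H0 : forall m, #|(set0 : {set 'I_m})| = 0%N by move=> m; exact: cards0.
rewrite H0 expr0 scale1r.
have := @D_S0 0 (inI (set0 : {set 'I_1})).
rewrite (@inI_char _ _ (fun _ => false)) ?andbF; last by move=> j; rewrite in_set0.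
move=> /(_ erefl) H; rewrite /cI -/(D 1 _) H D0 (tens_id HC) //.
Qed.

Lemma jwS n : jw C n.+2 = id 1 (x) jw C n.+1 - U (x) jw C n.
Proof.
rewrite /jw (bigID (fun I => inI I 1)) /= addrC.
congr (_ + _).
  rewrite (reindex_onto (fun J : {set 'I_n.+1} => lift ord0 @: J) (@hA' n)); last first.
    by move=> I /andP [_ H]; apply: hAK.
  rewrite tens_sumr; apply: eq_big => J.
    by rewrite apt_lift inI_lift inI0 hA'K eqxx andbF /= !andbT.
  by move=> _; rewrite card_lift cI_lift (tensZr HC).
rewrite (reindex_onto (@hB n) (@hB' n)); last first.
  move=> I /andP [aI H]; apply: hBK => //.
  by have /aptP HA := aI; case: (HA 1 H).
rewrite tens_sumr -sumrN; apply: eq_big => J.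
  by rewrite apt_hB inI_hB hB'K !eqxx /= !andbT.
by move=> _; rewrite card_hB cI_hB (tensZr HC) exprS mulN1r scaleNr.
Qed.

Theorem jw_idem n : jw C n \c jw C n = jw C n.
Proof. apply: Xidem; [exact: jw0 | exact: jw1 | exact: jwS]. Qed.
End S.

Theorem mainTheorem1 (K : fieldType) (C : PRO_ops K) (HC : isTL0 C) (n : nat) :
  mcomp C (jw C n) (jw C n) = jw C n.
Proof. exact: jw_idem. Qed.
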